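(* Assume $n \geq 2k$. Let $y = y_T\, y_{T^*}\, c_{\underline s,\underline t}$ and let $x' = x'_{T,T^*,\underline s,\underline t}$ be the simple tensor defined in the context. Then $e\,y\,x' \neq 0$ if and only if $s_i \neq t_i$ for all pairs $(s_i,t_i)$, $i=1,\dots,k-r$. Hence $eM_{\lambda,\mu} \neq 0$ precisely when this condition can be satisfied (for some choice of $\underline s,\underline t,T,T^*$ with $T,T^*$ of shapes $\lambda,\mu$), and in that case $eM_{\lambda,\mu}$ is the linear span of all the nonzero vectors $e\,y\,x'$, with $y$ and $x'$ of this form and $T,T^*$ of shapes $\lambda,\mu$.
   Context: Let $\mathfrak g = \mathfrak{gl}_n$ (complex), $V=\mathbb C^n$ the natural module with standard basis $v_1,\dots,v_n$, $V^*$ its dual with dual basis $v_1^*,\dots,v_n^*$, and $M = V^{\otimes k}\otimes (V^* )^{\otimes k}$. For $i,j\in\{1,\dots,k\}$ the contraction map $c_{i,j}$ on $M$ is $c_{i,j}(u_1\otimes\cdots\otimes u_k\otimes w_1^*\otimes\cdots\otimes w_k^* ) = \mathrm{tr}(u_iw_j^* )\sum_{\ell=1}^n u_1\otimes\cdots\otimes v_\ell\otimes\cdots\otimes u_k\otimes w_1^*\otimes\cdots\otimes v_\ell^*\otimes\cdots\otimes w_k^*$, with $v_\ell$ in the $i$th slot of $V^{\otimes k}$ and $v_\ell^*$ in the $j$th slot of $(V^* )^{\otimes k}$. Put $p_i = \frac1n c_{i,i}$ (commuting idempotents) and $e = (\mathrm{id}-p_1)(\mathrm{id}-p_2)\cdots(\mathrm{id}-p_k)$,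 so that $eM\cong \mathfrak{sl}_n^{\otimes k}$. For $0\le r\le k$, let $\underline s=\{s_1<\dots<s_{k-r}\}$ and $\underline t=\{t_1,\dots,t_{k-r}\}$ be ordered subsets of $\{1,\dots,k\}$ of size $k-r$, and $c_{\underline s,\underline t} = c_{s_1,t_1}\cdots c_{s_{k-r},t_{k-r}}$. Let $\lambda,\mu$ be partitions of $r$, $T$ a standard tableau of shape $\lambda$ with entries in $\underline s^c=\{1,\dots,k\}\setminus\underline s$, and $T^*$ a standard tableau of shape $\mu$ with entries in $\underline t^c$. The Young symmetrizer is $y_T = (\sum_{\rho\in R_T}\rho)(\sum_{\gamma\in C_T}\mathrm{sgn}(\gamma)\gamma)$ ($R_T$, $C_T$ the row and column groups of $T$), acting on $V^{\otimes k}$ by place permutations; $y_{T^*}$ acts likewise on $(V^* )^{\otimes k}$. The simple tensor $x'=x'_{T,T^*,\underline s,\underline t}=u_1'\otimes\cdots\otimes u_k'\otimes (w_1^* )'\otimes\cdots\otimes (w_k^* )'$ is defined by $u_p' = v_{r+i}$ if $p=s_i$, $u_p'=v_j$ if $p\in\underline s^c$ lies in row $j$ of $T$; $(w_p^* )' = v_{r+i}^*$ if $p=t_i$, $(w_p^* )'=v^*_{n-j+1}$ if $p\in\underline t^c$ lies in row $j$ of $T^*$. (The vector $yx'$ equals $yx$ for the analogous tensor $x$ with $v_1, v_1^*$ in the slots $s_i,t_i$, and is a maximal vector of highest weight $(\lambda,\mu)$.) $M_{\lambda,\mu}$ denotes the span of all such maximal vectors $y x'$ over all pairs $\underline s,\underline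 t$ of ordered subsets of size $k-r$ and all standard tableaux $T$ (resp. $T^*$) of shape $\lambda$ (resp. $\mu$) with entries in $\underline s^c$ (resp. $\underline t^c$); for $n\ge 2k$ these are the irreducible modules for $\mathrm{End}_{\mathfrak g}(M)$. *)

(* Defs.v *)
From HB Require Import structures.
From mathcomp Require Import all_boot all_order all_algebra all_fingroup.
Set Implicit Arguments. Unset Strict Implicit. Unset Printing Implicit Defensive.
Import GRing.Theory Num.Theory.
Local Open Scope ring_scope.

Definition is_partition (r : nat) (l : seq nat) : bool :=
  [&& sorted (fun a b => b <= a)%N l, all (fun x => 0 < x)%N l & sumn l == r].

Definition in_shape (l : seq nat) (a b : nat) : bool :=
  (a < size l)%N && (b < nth 0%N l a)%N.

Section Tensors.
Variables (C : fieldType) (n k : nat).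

(* M = V^{(x)k} (x) (V^* )^{(x)k}, V = C^n, in coordinates w.r.t. the basis
   v_{f 1} (x) .. (x) v_{f k} (x) vstar_{g 1} (x) .. (x) vstar_{g k}   (indices 0-based). *)
Definition idx := ({ffun 'I_k -> 'I_n} * {ffun 'I_k -> 'I_n})%type.
Definition tensor := {ffun idx -> GRing.regular C}.

Definition basis (q : idx) : tensor := [ffun q' => (q' == q)%:R].

Definition lin_ext (B : idx -> tensor) (x : tensor) : tensor :=
  \sum_(q : idx) x q *: B q.

Definition upd (f : {ffun 'I_k -> 'I_n}) (i : 'I_k) (l : 'I_n) : {ffun 'I_k -> 'I_n} :=
  [ffun a => if a == i then l else f a].

Definition contr (i j : 'I_k) : tensor -> tensor :=
  lin_ext (fun q => (q.1 i == q.2 j)%:R *: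
                     \sum_(l : 'I_n) basis (upd q.1 i l, upd q.2 j l)).

Definition projp (i : 'I_k) (x : tensor) : tensor := n%:R^-1 *: contr i i x.

Definition eop (x : tensor) : tensor :=
  foldr (fun i y => y - projp i y) x (enum 'I_k).

(* place permutations: sigma . (u_1 (x) .. (x) u_k) = u_{sigma^-1 1} (x) .. (x) u_{sigma^-1 k},
   on the V-factors (actV) resp. on the V^*-factors (actVs) *)
Definition actV (s : {perm 'I_k}) : tensor -> tensor :=
  lin_ext (fun q => basis ([ffun a => q.1 ((s^-1)%g a)], q.2)).
Definition actVs (s : {perm 'I_k}) : tensor -> tensor :=
  lin_ext (fun q => basis (q.1, [ffun a => q.2 ((s^-1)%g a)])).

Definition sgn (s : {perm 'I_k}) : C := (-1) ^+ odd_perm s.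

Definition young (act : {perm 'I_k} -> tensor -> tensor)
    (R Cg : {set {perm 'I_k}}) (x : tensor) : tensor :=
  \sum_(rho in R) act rho (\sum_(gam in Cg) sgn gam *: act gam x).

(* A tableau with entry set S is a map T : entries -> cells (row, column), 0-based. *)
Definition std_tableau (l : seq nat) (S : pred 'I_k) (T : 'I_k -> 'I_k * 'I_k) : Prop :=
  [/\ forall p, S p -> in_shape l (T p).1 (T p).2,
      forall p q, S p -> S q -> T p = T q -> p = q,
      forall a b : nat, in_shape l a b ->
        exists2 p, S p & (((T p).1 : nat) = a /\ ((T p).2 : nat) = b),
      forall p q, S p -> S q -> (T p).1 = (T q).1 -> ((T p).2 < (T q).2)%N -> (p < q)%N
    & forall p q, S p -> S q -> (T p).2 = (T q).2 -> ((T p).1 < (T q).1)%N -> (p < q)%N].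

Definition row_grp (S : pred 'I_k) (T : 'I_k -> 'I_k * 'I_k) : {set {perm 'I_k}} :=
  [set s : {perm 'I_k} | [forall p, if S p then (T (s p)).1 == (T p).1 else s p == p]].
Definition col_grp (S : pred 'I_k) (T : 'I_k -> 'I_k * 'I_k) : {set {perm 'I_k}} :=
  [set s : {perm 'I_k} | [forall p, if S p then (T (s p)).2 == (T p).2 else s p == p]].

Variable r : nat.

(* data (s, t, T, Ts) : s, t : ordered subsets of size k-r given as maps I_(k-r) -> I_k *)
Definition data := ({ffun 'I_(k - r) -> 'I_k} * {ffun 'I_(k - r) -> 'I_k}
                     * {ffun 'I_k -> 'I_k * 'I_k} * {ffun 'I_k -> 'I_k * 'I_k})%type.

Definition ds (d : data) := d.1.1.1.
Definition dt (d : data) := d.1.1.2.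
Definition dT (d : data) := d.1.2.
Definition dTs (d : data) := d.2.

Definition Sc (d : data) : pred 'I_k := fun p => p \notin codom (ds d).
Definition Tc (d : data) : pred 'I_k := fun p => p \notin codom (dt d).

Definition valid (lam mu : seq nat) (d : data) : Prop :=
  [/\ forall i j : 'I_(k - r), (i < j)%N -> (ds d i < ds d j)%N,
      injective (dt d),
      std_tableau lam (Sc d) (dT d)
    & std_tableau mu (Tc d) (dTs d)].

(* the simple tensor x' (0-based indices: v_{r+i} in slot s_i, v_j in row j of T,
   vstar_{r+i} in slot t_i, vstar_{n-j+1} in row j of Tstar) *)
Definition uidx (d : data) (p : 'I_k) : nat :=
  if [pick i | ds d i == p] is Some i then (r + i)%N else ((dT d p).1 : nat).
Definition widx (d : data) (p : 'I_k) : nat :=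
  if [pick i | dt d i == p] is Some i then (r + i)%N else (n - ((dTs d p).1).+1)%N.
Definition xprime (d : data) : tensor :=
  [ffun q : idx => ([forall p, (q.1 p == uidx d p :> nat) && (q.2 p == widx d p :> nat)])%:R].

Definition cst (d : data) (x : tensor) : tensor :=
  foldr (fun i y => contr (ds d i) (dt d i) y) x (enum 'I_(k - r)).

Definition yx (d : data) : tensor :=
  young actV (row_grp (Sc d) (dT d)) (col_grp (Sc d) (dT d))
    (young actVs (row_grp (Tc d) (dTs d)) (col_grp (Tc d) (dTs d))
       (cst d (xprime d))).

Definition cond (d : data) : Prop := forall i : 'I_(k - r), ds d i != dt d i.

Definition inspan (P : data -> Prop) (G : data -> tensor) (v : tensor) : Prop :=
  exists (F : seq data) (a : data -> C),
    (forall d, d \in F -> P d) /\ v = \sum_(d <- F) a d *: G d.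

End Tensors.

(* Main.v *)
Require Import Defs.
From HB Require Import structures.
From mathcomp Require Import all_boot all_order all_algebra all_fingroup.
From mathcomp Require Import zify.
Import GRing.Theory Num.Theory.
Local Open Scope ring_scope.

Set Implicit Arguments. Unset Strict Implicit. Unset Printing Implicit Defensive.

Section Basics.
Variables (C : numClosedFieldType) (n k : nat).
Local Notation tens := (tensor C n k).
Local Notation idx := (idx n k).

Lemma tZE (c : C) (x : tens) q : (c *: x) q = c * x q.
Proof. by rewrite ffunE. Qed.

Lemma tDE (x y : tens) q : (x + y) q = x q + y q.
Proof. by rewrite ffunE. Qed.

Lemma tBE (x y : tens) q : (x - y) q = x q - y q.
Proof. by rewrite !ffunE. Qed.

Lemma t0E q : (0 : tens) q = 0.
Proof. by rewrite ffunE. Qed.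

Lemma sum_delta (F : idx -> C) q0 : \sum_q F q * (q == q0)%:R = F q0.
Proof.
rewrite (bigD1 q0) //= eqxx mulr1 big1 ?addr0 // => q /negbTE ->; exact: mulr0.
Qed.

Lemma lin_extD B (x y : tens) : lin_ext B (x + y) = lin_ext B x + lin_ext B y.
Proof.
by rewrite /lin_ext -big_split /=; apply: eq_bigr => q _; rewrite ffunE scalerDl.
Qed.

Lemma lin_extZ B c (x : tens) : lin_ext B (c *: x) = c *: lin_ext B x.
Proof.
rewrite /lin_ext scaler_sumr; apply: eq_bigr => q _; rewrite ffunE scalerA //.
Qed.

Lemma lin_extE B (x : tens) q : lin_ext B x q = \sum_q' x q' * B q' q.
Proof. by rewrite /lin_ext sum_ffunE; apply: eq_bigr => q' _; rewrite tZE. Qed.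

Lemma basisE (q q' : idx) : basis C q q' = (q' == q)%:R.
Proof. by rewrite ffunE. Qed.


End Basics.

Section Basics.
Variables (C : numClosedFieldType) (n k : nat).
Local Notation tens := (tensor C n k).
Local Notation idx := (idx n k).

Lemma updE (f : {ffun 'I_k -> 'I_n}) i l a : upd f i l a = if a == i then l else f a.
Proof. by rewrite ffunE. Qed.

Lemma upd_id (f : {ffun 'I_k -> 'I_n}) i : upd f i (f i) = f.
Proof. by apply/ffunP => a; rewrite updE; case: eqP => // ->. Qed.

Lemma upd_upd (f : {ffun 'I_k -> 'I_n}) i l m : upd (upd f i l) i m = upd f i m.
Proof. by apply/ffunP => a; rewrite !updE; case: eqP. Qed.

Lemma upd_same (f g : {ffun 'I_k -> 'I_n}) i l :
  (upd f i l == g) = (g i == l) && (upd f i (g i) == g).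
Proof.
apply/eqP/andP => [<-|[/eqP -> /eqP //]].
by rewrite updE eqxx; split => //; rewrite upd_upd.
Qed.

Lemma contrE i j (x : tens) q :
  contr i j x q = (q.1 i == q.2 j)%:R *
     \sum_(m : 'I_n) x (upd q.1 i m, upd q.2 j m).
Proof.
set h := fun m => (upd q.1 i m, upd q.2 j m).
rewrite /contr lin_extE.
have E (q' : idx) : (q'.1 i == q'.2 j)%:R * (\sum_l basis C (upd q'.1 i l, upd q'.2 j l)) q
     = (q.1 i == q.2 j)%:R * (q' == h (q'.1 i))%:R :> C.
  rewrite sum_ffunE.
  have -> : \sum_l basis C (upd q'.1 i l, upd q'.2 j l) q
      = ((upd q'.1 i (q.1 i), upd q'.2 j (q.1 i)) == q)%:R.
    rewrite (bigD1 (q.1 i)) //= big1 ?addr0 ?basisE 1?eq_sym // => l nl.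
    rewrite basisE; case: eqP => // Eq; case/eqP: nl.
    by rewrite Eq /= updE eqxx.
  rewrite -!natrM !mulnb; congr (_ %:R); congr (nat_of_bool _).
  rewrite /h; clear h; case: q' => f g; case: q => F G /=.
  apply/idP/idP.
  - case/andP => /eqP fg /eqP [E1 E2].
    have FG : F i = G j by rewrite -E1 -E2 !updE !eqxx.
    rewrite FG eqxx /=; apply/eqP; congr pair.
      by rewrite -E1 upd_upd upd_id.
    by rewrite -E2 upd_upd fg upd_id.
  - case/andP => /eqP FG /eqP [E1 E2].
    have gj : g j = f i by rewrite E2 updE eqxx.
    rewrite gj eqxx /=; apply/eqP; congr pair.
      by apply/ffunP => a; rewrite {1}E1 !updE; case: eqP => // ->.
    by apply/ffunP => a; rewrite {1}E2 !updE; case: eqP => // ->.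
under eq_bigr => q' _ do rewrite tZE E mulrCA.
rewrite -mulr_sumr; congr (_ * _).
have E2 (q' : idx) : (q' == h (q'.1 i))%:R = \sum_m (q' == h m)%:R :> C.
  rewrite (bigD1 (q'.1 i)) //= big1 ?addr0 // => m nm.
  case: eqP => // Eq; case/eqP: nm; rewrite Eq /h /= updE eqxx //.
under eq_bigr => q' _ do rewrite E2 mulr_sumr.
rewrite exchange_big /=; apply: eq_bigr => m _.
by rewrite sum_delta.
Qed.

End Basics.

Section Basics.
Variables (C : numClosedFieldType) (n k : nat).
Local Notation tens := (tensor C n k).
Local Notation idx := (idx n k).

Lemma actVE s (x : tens) q : actV s x q = x ([ffun a => q.1 (s a)], q.2).
Proof.
rewrite /actV lin_extE -sum_delta; apply: eq_bigr => -[f' g'] _; rewrite basisE; case: q => f g.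
congr (_ * _%:R); congr (nat_of_bool _); apply/idP/idP => /eqP E; apply/eqP; rewrite E => /=.
  by congr pair; apply/ffunP => a; rewrite !ffunE permK.
by congr pair; apply/ffunP => a; rewrite !ffunE permKV.
Qed.

Lemma actVsE s (x : tens) q : actVs s x q = x (q.1, [ffun a => q.2 (s a)]).
Proof.
rewrite /actVs lin_extE -sum_delta; apply: eq_bigr => -[f' g'] _; rewrite basisE; case: q => f g.
congr (_ * _%:R); congr (nat_of_bool _); apply/idP/idP => /eqP E; apply/eqP; rewrite E => /=.
  by congr pair; apply/ffunP => a; rewrite !ffunE permK.
by congr pair; apply/ffunP => a; rewrite !ffunE permKV.
Qed.

Lemma youngVE R Cg (x : tens) q :
  young (@actV C n k) R Cg x q = \sum_(rho in R) \sum_(gam in Cg)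
     sgn C gam * x ([ffun a => q.1 (rho (gam a))], q.2).
Proof.
rewrite /young sum_ffunE; apply: eq_bigr => rho _.
rewrite actVE sum_ffunE; apply: eq_bigr => gam _.
by rewrite tZE actVE /=; congr (_ * x (_, _)); apply/ffunP => a; rewrite !ffunE.
Qed.

Lemma youngVsE R Cg (x : tens) q :
  young (@actVs C n k) R Cg x q = \sum_(rho in R) \sum_(gam in Cg)
     sgn C gam * x (q.1, [ffun a => q.2 (rho (gam a))]).
Proof.
rewrite /young sum_ffunE; apply: eq_bigr => rho _.
rewrite actVsE sum_ffunE; apply: eq_bigr => gam _.
by rewrite tZE actVsE /=; congr (_ * x (_, _)); apply/ffunP => a; rewrite !ffunE.
Qed.

Lemma projpE i (x : tens) q : projp i x q = n%:R^-1 * contr i i x q.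
Proof. by rewrite /projp tZE. Qed.

Lemma contrD i j (x y : tens) : contr i j (x + y) = contr i j x + contr i j y.
Proof. exact: lin_extD. Qed.
Lemma contrZ i j c (x : tens) : contr i j (c *: x) = c *: contr i j x.
Proof. exact: lin_extZ. Qed.

Definition eops (L : seq 'I_k) (x : tens) : tens :=
  foldr (fun i y => y - projp i y) x L.

Lemma eopsD L (x y : tens) : eops L (x + y) = eops L x + eops L y.
Proof.
elim: L => //= i L ->; rewrite /projp contrD scalerDr.
by rewrite opprD addrACA.
Qed.

Lemma eopsZ L c (x : tens) : eops L (c *: x) = c *: eops L x.
Proof.
elim: L => //= i L ->; rewrite /projp contrZ scalerBr !scalerA.
by rewrite mulrC.
Qed.

Lemma eops0 L : eops L 0 = 0.
Proof. by have := eopsZ L 0 0; rewrite !scale0r. Qed.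

Lemma eop_sum I (F : seq I) (a : I -> C) (G : I -> tens) :
  eop (\sum_(d <- F) a d *: G d) = \sum_(d <- F) a d *: eop (G d).
Proof.
rewrite /eop -/(eops _ _).
elim: F => [|d F IH]; first by rewrite !big_nil eops0.
by rewrite !big_cons eopsD eopsZ IH.
Qed.

Lemma eops_coord L (x : tens) (q : idx) : (forall p, q.1 p != q.2 p) -> eops L x q = x q.
Proof.
move=> Hq; elim: L => //= i L IH.
by rewrite tBE projpE contrE (negbTE (Hq i)) mul0r mulr0 subr0 IH.
Qed.

End Basics.

Section PhiSec.
Variables (C : numClosedFieldType) (n k : nat).
Local Notation tens := (tensor C n k).
Local Notation idx := (idx n k).

Definition Phi (a : 'I_k) (w : tens) := forall (f g : {ffun 'I_k -> 'I_n}) l,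
  w (f, g) = (f a == g a)%:R * w (upd f a l, upd g a l).

Lemma upd_comm (f : {ffun 'I_k -> 'I_n}) i a m l : i != a ->
  upd (upd f i m) a l = upd (upd f a l) i m.
Proof.
move=> ia; apply/ffunP => b; rewrite !updE.
case: (eqVneq b a) => [->|//]; by rewrite eq_sym (negbTE ia).
Qed.

Lemma updNE (f : {ffun 'I_k -> 'I_n}) i m a : a != i -> upd f i m a = f a.
Proof. by move=> ai; rewrite updE (negbTE ai). Qed.

Lemma Phi_contr_aa a (z : tens) : Phi a (contr a a z).
Proof.
move=> f g l; rewrite !contrE /= !updE !eqxx mul1r.
by congr (_ * _); apply: eq_bigr => m _; rewrite !upd_upd.
Qed.

Lemma Phi_contr a i j (w : tens) : i != a -> j != a -> Phi a w -> Phi a (contr i j w).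
Proof.
move=> ia ja Pw f g l; have ai : a != i by rewrite eq_sym.
have aj : a != j by rewrite eq_sym.
rewrite !contrE /=.
rewrite !updNE 1?eq_sym //.
rewrite mulrCA; congr (_ * _); rewrite mulr_sumr; apply: eq_bigr => m _.
rewrite (Pw _ _ l) !updNE 1?eq_sym //.
by rewrite upd_comm // [upd (upd g j m) a l]upd_comm // eq_sym.
Qed.

Lemma Phi_actV a (s : {perm 'I_k}) (w : tens) : s a = a -> Phi a w -> Phi a (actV s w).
Proof.
move=> sa Pw f g l; rewrite !actVE /= (Pw _ _ l) ffunE sa; congr (_ * w (_, _)).
apply/ffunP => b; rewrite !ffunE.
have -> : (s b == a) = (b == a) by rewrite -{1}sa (inj_eq perm_inj).
by [].
Qed.

Lemma Phi_actVs a (s : {perm 'I_k}) (w : tens) : s a = a -> Phi a w -> Phi a (actVs s w).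
Proof.
move=> sa Pw f g l; rewrite !actVsE /= (Pw _ _ l) ffunE sa; congr (_ * w (_, _)).
apply/ffunP => b; rewrite !ffunE.
have -> : (s b == a) = (b == a) by rewrite -{1}sa (inj_eq perm_inj).
by [].
Qed.

Lemma Phi0 a : Phi a 0.
Proof. by move=> f g l; rewrite !t0E mulr0. Qed.

Lemma PhiD a (x y : tens) : Phi a x -> Phi a y -> Phi a (x + y).
Proof. by move=> Px Py f g l; rewrite !tDE (Px _ _ l) (Py _ _ l) mulrDr. Qed.

Lemma PhiZ a c (x : tens) : Phi a x -> Phi a (c *: x).
Proof. by move=> Px f g l; rewrite !tZE (Px _ _ l) mulrCA. Qed.

Lemma Phi_sum a I (r : seq I) (P : pred I) (F : I -> tens) :
  (forall i, P i -> Phi a (F i)) -> Phi a (\sum_(i <- r | P i) F i).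
Proof. move=> H; apply: (big_ind (Phi a)) => //; [exact: Phi0 | exact: PhiD]. Qed.

Lemma Phi_step a b (w : tens) : b != a -> Phi a w -> Phi a (w - projp b w).
Proof.
move=> ba Pw; rewrite /projp -scaleN1r; apply: PhiD => //; apply: PhiZ; apply: PhiZ.
exact: Phi_contr.
Qed.

Lemma Phi_kill a (w : tens) : n%:R != 0 :> C -> Phi a w -> w - projp a w = 0.
Proof.
move=> n0 Pw; apply/ffunP => -[f g]; rewrite tBE t0E projpE contrE /=.
have -> : \sum_(m < n) w (upd f a m, upd g a m) = w (f, upd g a (f a)) *+ n.
  rewrite (eq_bigr (fun _ => w (f, upd g a (f a)))) ?sumr_const ?card_ord // => m _.
  by rewrite (Pw _ _ (f a)) !updE !eqxx mul1r !upd_upd upd_id.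
case: (eqVneq (f a) (g a)) => [fg|fg].
  rewrite mul1r fg upd_id -[w (f, g) *+ n]mulr_natr mulrCA mulVf // mulr1 subrr //.
by rewrite /= mul0r mulr0 subr0 (Pw _ _ (f a)) (negbTE fg) mul0r.
Qed.

Lemma eops_pres a L (w : tens) : a \notin L -> Phi a w -> Phi a (eops L w).
Proof.
elim: L => //= b L IH; rewrite inE negb_or => /andP[ab aL] Pw.
by apply: Phi_step; rewrite 1?eq_sym //; apply: IH.
Qed.

Lemma eops_kill a L (w : tens) : n%:R != 0 :> C -> a \in L -> Phi a w -> eops L w = 0.
Proof.
move=> n0; elim: L => //= b L IH; rewrite inE => aL Pw.
case: (boolP (a \in L)) => aL'.
  rewrite IH // /projp; have -> : contr b b (0:tens) = 0.
    by apply/ffunP => q; rewrite contrE t0E big1 ?mulr0 // => m _; rewrite t0E.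
  by rewrite scaler0 subr0.
have /eqP ab : a == b by move: aL; rewrite (negbTE aL') orbF.
by subst b; apply: Phi_kill => //; apply: eops_pres.
Qed.

End PhiSec.

Section GrpFacts.
Variable k : nat.
Implicit Types (S : pred 'I_k) (T : 'I_k -> 'I_k * 'I_k).

Lemma row_fix S T (s : {perm 'I_k}) p : s \in row_grp S T -> ~~ S p -> s p = p.
Proof. by rewrite inE => /forallP /(_ p); case: (S p) => // /eqP. Qed.
Lemma col_fix S T (s : {perm 'I_k}) p : s \in col_grp S T -> ~~ S p -> s p = p.
Proof. by rewrite inE => /forallP /(_ p); case: (S p) => // /eqP. Qed.
Lemma row_row S T (s : {perm 'I_k}) p : s \in row_grp S T -> S p -> (T (s p)).1 = (T p).1.
Proof. by rewrite inE => /forallP /(_ p); case: (S p) => // /eqP. Qed.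
Lemma col_col S T (s : {perm 'I_k}) p : s \in col_grp S T -> S p -> (T (s p)).2 = (T p).2.
Proof. by rewrite inE => /forallP /(_ p); case: (S p) => // /eqP. Qed.

Lemma fix_stable S (s : {perm 'I_k}) p : (forall p, ~~ S p -> s p = p) -> S p -> S (s p).
Proof.
move=> H Sp; apply/negPn/negP => nS.
have E := H _ nS; move/perm_inj: E => E; by rewrite E in nS; rewrite Sp in nS.
Qed.

Lemma rowgrp1 S T : 1%g \in row_grp S T.
Proof. by rewrite inE; apply/forallP => p; rewrite perm1; case: (S p). Qed.
Lemma colgrp1 S T : 1%g \in col_grp S T.
Proof. by rewrite inE; apply/forallP => p; rewrite perm1; case: (S p). Qed.

End GrpFacts.

Section PartA.
Variables (C : numClosedFieldType) (n k r : nat) (d : data k r).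
Local Notation tens := (tensor C n k).

Lemma Phi_young_V a (R Cg : {set {perm 'I_k}}) (w : tens) :
  (forall s, s \in R -> s a = a) -> (forall s, s \in Cg -> s a = a) ->
  Phi a w -> Phi a (young (@actV C n k) R Cg w).
Proof.
move=> HR HC Pw; apply: Phi_sum => rho /HR Hr; apply: Phi_actV => //.
apply: Phi_sum => gam /HC Hg; apply: PhiZ; exact: Phi_actV.
Qed.

Lemma Phi_young_Vs a (R Cg : {set {perm 'I_k}}) (w : tens) :
  (forall s, s \in R -> s a = a) -> (forall s, s \in Cg -> s a = a) ->
  Phi a w -> Phi a (young (@actVs C n k) R Cg w).
Proof.
move=> HR HC Pw; apply: Phi_sum => rho /HR Hr; apply: Phi_actVs => //.
apply: Phi_sum => gam /HC Hg; apply: PhiZ; exact: Phi_actVs.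
Qed.

Lemma Phi_cst_gen i0 (J : seq 'I_(k - r)) (x : tens) :
  injective (ds d) -> injective (dt d) -> ds d i0 = dt d i0 -> i0 \in J ->
  Phi (ds d i0) (foldr (fun i y => contr (ds d i) (dt d i) y) x J).
Proof.
move=> Is It e0; elim: J => //= j J IH; rewrite inE.
case: (eqVneq i0 j) => [<- _|ne /= iJ].
  rewrite e0; exact: Phi_contr_aa.
apply: Phi_contr; last exact: IH.
  by rewrite (inj_eq Is) eq_sym.
by rewrite e0 (inj_eq It) eq_sym.
Qed.

Lemma onlyif_dir i0 : n%:R != 0 :> C -> injective (ds d) -> injective (dt d) ->
  ds d i0 = dt d i0 -> eop (yx C n d) = 0.
Proof.
move=> n0 Is It e0; rewrite /eop -/(eops _ _).
apply: (@eops_kill _ _ _ (ds d i0)) => //; first by rewrite mem_enum.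
have nS : ~~ Sc d (ds d i0) by rewrite /Sc negbK codom_f.
have nT : ~~ Tc d (ds d i0) by rewrite /Tc negbK e0 codom_f.
apply: Phi_young_V => [s /row_fix|s /col_fix|]; first by apply.
  by apply.
apply: Phi_young_Vs => [s /row_fix|s /col_fix|]; first by apply.
  by apply.
apply: Phi_cst_gen => //; exact: mem_enum.
Qed.

End PartA.

Section PartB.
Variables (C : numClosedFieldType) (n k r : nat) (d : data k r).
Hypotheses (hn : (2 * k <= n)%N) (hr : (r <= k)%N).
Hypotheses (Is : injective (ds d)) (It : injective (dt d)).
Local Notation tens := (tensor C n k).

Lemma uidx_s i : uidx d (ds d i) = (r + i)%N.
Proof.
rewrite /uidx; case: pickP => [j /eqP /Is -> //|H].
by have := H i; rewrite eqxx.
Qed.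

Lemma widx_t i : widx n d (dt d i) = (r + i)%N.
Proof.
rewrite /widx; case: pickP => [j /eqP /It -> //|H].
by have := H i; rewrite eqxx.
Qed.

Lemma uidx_Sc p : Sc d p -> uidx d p = (dT d p).1.
Proof.
rewrite /uidx /Sc; case: pickP => // i /eqP <-; by rewrite codom_f.
Qed.

Lemma widx_Tc p : Tc d p -> widx n d p = (n - ((dTs d p).1).+1)%N.
Proof.
rewrite /widx /Tc; case: pickP => // i /eqP <-; by rewrite codom_f.
Qed.

Lemma uidx_lt p : (uidx d p < n)%N.
Proof.
have kp : (0 < k)%N by case: p => /= m; lia.
rewrite /uidx; case: pickP => [i _|_].
  by have := ltn_ord i; lia.
by have := ltn_ord (dT d p).1; lia.
Qed.

Lemma widx_lt p : (widx n d p < n)%N.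
Proof.
have kp : (0 < k)%N by case: p => /= m; lia.
rewrite /widx; case: pickP => [i _|_].
  by have := ltn_ord i; lia.
by have := ltn_ord (dTs d p).1; lia.
Qed.

Definition U : {ffun 'I_k -> 'I_n} := [ffun p => Ordinal (uidx_lt p)].
Definition W : {ffun 'I_k -> 'I_n} := [ffun p => Ordinal (widx_lt p)].

Definition Pz (J : seq 'I_(k - r)) (f g : {ffun 'I_k -> 'I_n}) : bool :=
  [&& [forall p, (p \notin map (ds d) J) ==> (f p == uidx d p :> nat)],
      [forall p, (p \notin map (dt d) J) ==> (g p == widx n d p :> nat)]
    & all (fun i => f (ds d i) == g (dt d i)) J].

Lemma forall_upd (X : pred 'I_k) (h0 : 'I_k -> nat) (f : {ffun 'I_k -> 'I_n}) s m :
  X s ->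
  [forall p, X p ==> (upd f s m p == h0 p :> nat)] =
  (m == h0 s :> nat) && [forall p, (X p && (p != s)) ==> (f p == h0 p :> nat)].
Proof.
move=> Xs; apply/forallP/andP => [H|[Hm /forallP H] p].
  split; first by have := H s; rewrite Xs updE eqxx.
  apply/forallP => p; apply/implyP => /andP[Xp ps].
  by have := H p; rewrite Xp updE (negbTE ps).
rewrite updE; case: (eqVneq p s) => [->|ps]; first by rewrite Xs.
by have := H p; rewrite ps andbT.
Qed.

Lemma z_formula (J : seq 'I_(k - r)) q : uniq J ->
  foldr (fun i y => contr (ds d i) (dt d i) y) (xprime C n d) J q = (Pz J q.1 q.2)%:R.
Proof.
case: q => f g; elim: J f g => [|i J IH] f g /=.
  move=> _; rewrite ffunE /Pz /= andbT; congr (_%:R); congr (nat_of_bool _).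
  apply/forallP/andP => [H|[/forallP H1 /forallP H2] p].
    by split; apply/forallP => p; have /andP[] := H p.
  by rewrite (H1 p) (H2 p).
case/andP => iJ uJ.
rewrite contrE /=.
have nsJ : ds d i \notin map (ds d) J by rewrite (mem_map Is).
have ntJ : dt d i \notin map (dt d) J by rewrite (mem_map It).
have lt : (r + i < n)%N by have := ltn_ord i; lia.
under eq_bigr => m _ do rewrite IH //.
rewrite /Pz /=.
set A := [forall p, _ ==> (f p == _ :> nat)].
set B := [forall p, _ ==> (g p == _ :> nat)].
set Cc := all _ J.
have HA : A = [forall p, ((p \notin map (ds d) J) && (p != ds d i)) ==> (f p == uidx d p :> nat)].
  by apply: eq_forallb => p; rewrite inE negb_or andbC.
have HB : B = [forall p, ((p \notin map (dt d) J) && (p != dt d i)) ==> (g p == widx n d p :> nat)].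
  by apply: eq_forallb => p; rewrite inE negb_or andbC.
have E m : [&& [forall p, (p \notin [seq ds d i | i <- J]) ==> (upd f (ds d i) m p == uidx d p :> nat)],
         [forall p, (p \notin [seq dt d i | i <- J]) ==> (upd g (dt d i) m p == widx n d p :> nat)]
       & all (fun i0 : 'I_(k - r) => upd f (ds d i) m (ds d i0) == upd g (dt d i) m (dt d i0)) J]%:R
    = (m == Ordinal lt)%:R * [&& A, B & Cc]%:R :> C.
  rewrite (forall_upd (X := fun p => p \notin map (ds d) J) (uidx d)) //.
  rewrite (forall_upd (X := fun p => p \notin map (dt d) J) (widx n d)) //.
  rewrite uidx_s widx_t -HA -HB.
  have -> : all (fun i0 : 'I_(k - r) => upd f (ds d i) m (ds d i0) == upd g (dt d i) m (dt d i0)) J = Cc.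
    apply: eq_in_all => j jJ; rewrite !updE.
    have -> : (ds d j == ds d i) = false.
      by apply/negbTE; apply: contraNneq iJ => /Is <-.
    have -> : (dt d j == dt d i) = false.
      by apply/negbTE; apply: contraNneq iJ => /It <-.
    by [].
  rewrite -natrM mulnb; congr (_%:R); congr (nat_of_bool _).
  have -> : (m == Ordinal lt) = (m == r + i :> nat) by [].
  by case: (m == r + i :> nat).
under eq_bigr => m _ do rewrite E.
rewrite (bigD1 (Ordinal lt)) //= eqxx mul1r big1 ?addr0; last first.
  by move=> m /negbTE ->; rewrite mul0r.
rewrite -natrM mulnb; congr (_%:R); congr (nat_of_bool _).
by case: (f _ == _); rewrite /= ?andbF.
Qed.

End PartB.

Section G1.
Variable k : nat.
Variables (S : pred 'I_k) (T : 'I_k -> 'I_k * 'I_k) (h : 'I_k -> nat).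
Hypothesis TS : forall p q, S p -> S q -> T p = T q -> p = q.
Hypothesis Hh : forall p q, S p -> S q -> (h p == h q) = ((T p).1 == (T q).1).

Lemma G2 (rho : {perm 'I_k}) : rho \in row_grp S T -> forall p, h (rho p) = h p.
Proof.
move=> Hr p; case: (boolP (S p)) => Sp; last by rewrite (row_fix Hr Sp).
have Srp : S (rho p) by apply: fix_stable Sp => q; exact: (row_fix Hr).
by apply/eqP; rewrite Hh // (row_row Hr Sp).
Qed.

Lemma G1 (rho gam : {perm 'I_k}) : rho \in row_grp S T -> gam \in col_grp S T ->
  [forall p, S p ==> (h (rho (gam p)) == h p)] = (gam == 1%g).
Proof.
move=> Hr Hc; apply/forallP/eqP => [H|-> p]; last first.
  by rewrite perm1 G2 // eqxx implybT.
apply/permP => p; rewrite perm1.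
case: (boolP (S p)) => Sp; last by rewrite (col_fix Hc Sp).
have Sgp : S (gam p) by apply: fix_stable Sp => q; exact: (col_fix Hc).
have := H p; rewrite Sp G2 // Hh // => /eqP E1.
have E2 := col_col Hc Sp.
apply: TS => //; move: E1 E2; case: (T (gam p)) => a b; case: (T p) => c e /= -> -> //.
Qed.

End G1.

Section PartB2.
Variables (C : numClosedFieldType) (n k r : nat) (d : data k r).
Hypotheses (hn : (2 * k <= n)%N) (hr : (r <= k)%N).
Hypotheses (Is : injective (ds d)) (It : injective (dt d)).
Hypothesis TS : forall p q, Sc d p -> Sc d q -> dT d p = dT d q -> p = q.
Hypothesis TSs : forall p q, Tc d p -> Tc d q -> dTs d p = dTs d q -> p = q.
Local Notation tens := (tensor C n k).
Local Notation U := (U d hn hr).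
Local Notation W := (W d hn hr).
Local Notation Pz := (Pz d (enum 'I_(k - r))).

Lemma map_enum_ds : map (ds d) (enum 'I_(k - r)) = codom (ds d).
Proof. by rewrite codomE. Qed.
Lemma map_enum_dt : map (dt d) (enum 'I_(k - r)) = codom (dt d).
Proof. by rewrite codomE. Qed.

Lemma PzU1 rho gam (G : {ffun 'I_k -> 'I_n}) :
  rho \in row_grp (Sc d) (dT d) -> gam \in col_grp (Sc d) (dT d) ->
  Pz [ffun a => U (rho (gam a))] G = (gam == 1%g) && Pz U G.
Proof.
move=> Hr Hc; rewrite /Pz map_enum_ds.
have -> : [forall p, (p \notin codom (ds d)) ==> ([ffun a => U (rho (gam a))] p == uidx d p :> nat)]
   = (gam == 1%g).
  rewrite -(G1 (h := uidx d) TS _ Hr Hc); last first.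
    by move=> p q Sp Sq; rewrite !uidx_Sc.
  by apply: eq_forallb => p; rewrite !ffunE.
have -> : [forall p, (p \notin codom (ds d)) ==> (U p == uidx d p :> nat)] = true.
  by apply/forallP => p; rewrite ffunE eqxx implybT.
have -> : all (fun i => [ffun a => U (rho (gam a))] (ds d i) == G (dt d i)) (enum 'I_(k - r))
   = all (fun i => U (ds d i) == G (dt d i)) (enum 'I_(k - r)).
  apply: eq_all => i; rewrite ffunE.
  have nS : ~~ Sc d (ds d i) by rewrite /Sc negbK codom_f.
  by rewrite (col_fix Hc nS) (row_fix Hr nS).
by [].
Qed.

Lemma PzW1 rho gam (F : {ffun 'I_k -> 'I_n}) :
  rho \in row_grp (Tc d) (dTs d) -> gam \in col_grp (Tc d) (dTs d) ->
  Pz F [ffun a => W (rho (gam a))] = (gam == 1%g) && Pz F W.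
Proof.
move=> Hr Hc; rewrite /Pz map_enum_dt.
have -> : [forall p, (p \notin codom (dt d)) ==> ([ffun a => W (rho (gam a))] p == widx n d p :> nat)]
   = (gam == 1%g).
  rewrite -(G1 (h := widx n d) TSs _ Hr Hc); last first.
    move=> p q Sp Sq; rewrite !widx_Tc //.
    have := ltn_ord (dTs d p).1; have := ltn_ord (dTs d q).1.
    move: ((dTs d p).1) ((dTs d q).1) => a b ha hb.
    apply/eqP/eqP => [E|/(congr1 val) E]; last by rewrite E.
    by apply: val_inj => /=; lia.
  by apply: eq_forallb => p; rewrite !ffunE.
have -> : [forall p, (p \notin codom (dt d)) ==> (W p == widx n d p :> nat)] = true.
  by apply/forallP => p; rewrite ffunE eqxx implybT.
have -> : all (fun i => F (ds d i) == [ffun a => W (rho (gam a))] (dt d i)) (enum 'I_(k - r))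
   = all (fun i => F (ds d i) == W (dt d i)) (enum 'I_(k - r)).
  apply: eq_all => i; rewrite ffunE.
  have nS : ~~ Tc d (dt d i) by rewrite /Tc negbK codom_f.
  by rewrite (col_fix Hc nS) (row_fix Hr nS).
by rewrite andbCA.
Qed.

Lemma PzUW : Pz U W.
Proof.
rewrite /Pz; apply/and3P; split.
- by apply/forallP => p; rewrite ffunE eqxx implybT.
- by apply/forallP => p; rewrite ffunE eqxx implybT.
- by apply/allP => i _; rewrite !ffunE; apply/eqP; apply: val_inj; rewrite /= uidx_s // widx_t.
Qed.


Lemma sgn_delta (A : {set {perm 'I_k}}) : 1%g \in A ->
  \sum_(g in A) sgn C g * (g == 1%g)%:R = 1.
Proof.
move=> A1; rewrite (bigD1 1%g) //= eqxx /sgn odd_perm1 mulr1 big1 ?addr0 //.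
by move=> g /andP[_ /negbTE ->]; rewrite mulr0.
Qed.

Lemma yx_q0 : yx C n d (U, W) =
  (#|row_grp (Sc d) (dT d)| * #|row_grp (Tc d) (dTs d)|)%:R.
Proof.
rewrite /yx youngVE /=.
set R' := row_grp (Tc d) (dTs d).
set C' := col_grp (Tc d) (dTs d).
have Hin rho gam : rho \in row_grp (Sc d) (dT d) -> gam \in col_grp (Sc d) (dT d) ->
   young (@actVs C n k) R' C' (cst d (xprime C n d)) ([ffun a => U (rho (gam a))], W)
   = (gam == 1%g)%:R * #|R'|%:R.
  move=> Hr Hc; rewrite youngVsE /=.
  transitivity (\sum_(rho' in R') (gam == 1%g)%:R * \sum_(gam' in C') sgn C gam' * (gam' == 1%g)%:R).
    apply: eq_bigr => rho' Hr'; rewrite mulr_sumr; apply: eq_bigr => gam' Hc'.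
    rewrite /cst z_formula ?enum_uniq //= (PzU1 _ Hr Hc) (PzW1 _ Hr' Hc') PzUW andbT.
    by rewrite -mulnb natrM mulrCA.
  by under eq_bigr => rho' _ do rewrite (sgn_delta (colgrp1 _ _)) mulr1; rewrite sumr_const mulr_natr.
transitivity (\sum_(rho in row_grp (Sc d) (dT d)) (#|R'|%:R : C)).
  apply: eq_bigr => rho Hr.
  transitivity (\sum_(gam in col_grp (Sc d) (dT d)) sgn C gam * (gam == 1%g)%:R * #|R'|%:R).
    by apply: eq_bigr => gam Hc; rewrite Hin // mulrA.
  by rewrite -mulr_suml (sgn_delta (colgrp1 _ _)) mul1r.
by rewrite sumr_const natrM mulr_natl.
Qed.

End PartB2.

Lemma size_part r l : is_partition r l -> (size l <= r)%N.
Proof.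
case/and3P => _ Hp /eqP <-; elim: l Hp => //= a l IH /andP[a0 /IH]; lia.
Qed.

Section Final.
Variables (C : numClosedFieldType) (n k r : nat) (d : data k r).
Hypotheses (hn : (2 * k <= n)%N) (hr : (r <= k)%N).
Hypotheses (Is : injective (ds d)) (It : injective (dt d)).
Hypothesis rS : forall p, Sc d p -> ((dT d p).1 < r)%N.
Hypothesis rT : forall p, Tc d p -> ((dTs d p).1 < r)%N.

Lemma UW_neq : cond d -> forall p, U d hn hr p != W d hn hr p.
Proof.
move=> cd p; rewrite -val_eqE /= !ffunE /=.
have Sp : (forall i, (ds d i == p) = false) -> Sc d p.
  by move=> H; rewrite /Sc; apply/codomP => -[i Ei]; have := H i; rewrite Ei eqxx.
have Tp : (forall i, (dt d i == p) = false) -> Tc d p.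
  by move=> H; rewrite /Tc; apply/codomP => -[i Ei]; have := H i; rewrite Ei eqxx.
rewrite /uidx /widx; case: pickP => [i /eqP Ei|Ni]; case: pickP => [j /eqP Ej|Nj].
- apply/eqP => E; have ij : i = j by apply: val_inj => /=; lia.
  by have := cd i; rewrite Ei ij Ej eqxx.
- have := rT (Tp Nj); have := ltn_ord i; lia.
- have := rS (Sp Ni); lia.
- have := rS (Sp Ni); have := rT (Tp Nj); lia.
Qed.

End Final.

Unset Implicit Arguments. Set Strict Implicit. Set Printing Implicit Defensive.

Theorem lemma3p4 (C : numClosedFieldType) (n k r : nat) (lam mu : seq nat) :
  (2 * k <= n)%N -> (r <= k)%N -> is_partition r lam -> is_partition r mu ->
  [/\ (forall d : data k r, valid lam mu d ->
          (eop (@yx C n k r d) != 0 <-> cond d)),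
      ((exists m, inspan (valid lam mu) (@yx C n k r) m /\ eop m != 0) <->
         (exists d : data k r, valid lam mu d /\ cond d))
    & (exists d : data k r, valid lam mu d /\ cond d) ->
      forall v : tensor C n k,
        (exists m, inspan (valid lam mu) (@yx C n k r) m /\ v = eop m) <->
        inspan (fun d => valid lam mu d /\ eop (@yx C n k r d) != 0)
               (fun d => eop (@yx C n k r d)) v].
Proof.
move=> hn hr plam pmu.
have part1 : forall d : data k r, valid lam mu d -> (eop (@yx C n k r d) != 0 <-> cond d).
  move=> d [inc It [Tin Tinj _ _ _] [Tsin Tsinj _ _ _]].
  have Is : injective (ds d).
    move=> i j E; apply/eqP; apply: contraT => ne; case: (ltngtP i j) => h.
    - by have := inc _ _ h; rewrite E ltnn.
    - by have := inc _ _ h; rewrite E ltnn.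
    - by move/val_inj: h => h; rewrite h eqxx in ne.
  have rS p : Sc d p -> ((dT d p).1 < r)%N.
    by move=> Sp; have := Tin p Sp; rewrite /in_shape => /andP[h _]; have := size_part plam; lia.
  have rT p : Tc d p -> ((dTs d p).1 < r)%N.
    by move=> Sp; have := Tsin p Sp; rewrite /in_shape => /andP[h _]; have := size_part pmu; lia.
  split.
  - move=> nz; case: (boolP [forall i, ds d i != dt d i]) => [/forallP //|].
    rewrite negb_forall => /existsP [i /negPn /eqP e].
    case/eqP: nz; apply: (onlyif_dir (i0 := i)) => //.
    by rewrite pnatr_eq0; have := ltn_ord i; lia.
  - move=> cd; apply/eqP => E.
    have := congr1 (fun x : tensor C n k => x (U d hn hr, W d hn hr)) E.
    rewrite /= t0E /eop -/(eops _ _) eops_coord; last exact: UW_neq.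
    rewrite (yx_q0 C hn hr Is It Tinj Tsinj); move/eqP; rewrite pnatr_eq0 muln_eq0.
    have h1 : (0 < #|row_grp (Sc d) (dT d)|)%N by apply/card_gt0P; exists 1%g; exact: rowgrp1.
    have h2 : (0 < #|row_grp (Tc d) (dTs d)|)%N by apply/card_gt0P; exists 1%g; exact: rowgrp1.
    by move: h1 h2; case: #|_| => // ? ; case: #|_|.
split => //.
- split.
  + case=> m [[F [a [HF ->]]] nz]; rewrite eop_sum in nz.
    case: (boolP (has (fun d => eop (@yx C n k r d) != 0) F)) => [/hasP [d dF dnz]|/hasPn H].
      by exists d; split; [exact: HF | apply/part1 => //; exact: HF].
    rewrite big_seq big1 ?eqxx // in nz => d dF.
    by move/negPn/eqP: (H d dF) => ->; rewrite scaler0.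
  + case=> d [vd cd]; exists (yx C n d); split; last by apply/part1.
    exists [:: d], (fun _ => 1); split; first by move=> d'; rewrite inE => /eqP ->.
    by rewrite big_seq1 scale1r.
- move=> _ v; split.
  + case=> m [[F [a [HF ->]]] ->]; rewrite eop_sum.
    exists [seq d <- F | eop (@yx C n k r d) != 0], a; split.
      by move=> d; rewrite mem_filter => /andP[nz dF]; split => //; exact: HF.
    rewrite big_filter [in RHS]big_mkcond /=; apply: eq_bigr => d' _.
    by case: ifP => // /negbFE /eqP ->; rewrite scaler0.
  + case=> F [a [HF ->]]; exists (\sum_(d <- F) a d *: yx C n d); split; last by rewrite eop_sum.
    by exists F, a; split => // d dF; case: (HF d dF).
Qed.
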